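(* Let $f$ be a strictly convex norm on $\mathbb{R}^n$. Then for every $\varepsilon>0$ there exists $\delta>0$ such that for every $\theta\in\partial B_f^1(0)$ and every $\xi\in B_f^1(0)\setminus B_f^1(\theta)$ satisfying $$\Xi(\xi)\in\partial B_f^1(0)\cap\left(B_f^{1+\delta}(\theta)\setminus B_f^1(\theta)\right)$$ we have $f(\xi)>1-\varepsilon$.
   Context: A norm $f$ here is a continuous function $\mathbb{R}^n\to\mathbb{R}_+$ with $f(x)=0\iff x=0$, $f(-x)=f(x)$, $f(tx)=tf(x)$ for $t\ge0$, and convex unit ball with $0$ in its interior; $f$ is strictly convex if its unit ball is strictly convex (its boundary contains no line segments). $B_f^\lambda(a)=\{y\in\mathbb{R}^n: f(y-a)\le\lambda\}$, and $\partial$ denotes the boundary. For $\xi\ne0$, $\Xi(\xi)=\xi/f(\xi)$. *)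

(* Defs.v *)
(* vectors of R^n are row vectors 'rV[R]_n over R : realType,
   with the canonical (product) topology of MathComp-Analysis. *)
From HB Require Import structures.
From mathcomp Require Import all_boot all_order all_algebra.
From mathcomp Require Import all_classical all_reals all_analysis.
Set Implicit Arguments. Unset Strict Implicit. Unset Printing Implicit Defensive.
Import Order.TTheory GRing.Theory Num.Theory.
Import numFieldNormedType.Exports.
Local Open Scope classical_set_scope.
Local Open Scope ring_scope.

Definition boundary {T : topologicalType} (A : set T) : set T :=
  closure A `\` interior A.

Definition convex_vset {R : realType} {n : nat} (A : set 'rV[R]_n) : Prop :=
  forall x y (t : R), A x -> A y -> 0 <= t -> t <= 1 -> A ((1 - t) *: x + t *: y).

Definition fball {R : realType} {n : nat} (f : 'rV[R]_n -> R) (lam : R)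
  (a : 'rV[R]_n) : set 'rV[R]_n := [set y | f (y - a) <= lam].

Definition is_norm {R : realType} {n : nat} (f : 'rV[R]_n -> R) : Prop :=
  continuous f /\
  (forall x, 0 <= f x) /\
  (forall x, f x = 0 <-> x = 0) /\
  (forall x, f (- x) = f x) /\
  (forall (t : R) x, 0 <= t -> f (t *: x) = t * f x) /\
  convex_vset (fball f 1 0) /\
  interior (fball f 1 0) 0.

Definition strictly_convex {R : realType} {n : nat} (f : 'rV[R]_n -> R) : Prop :=
  ~ exists x y : 'rV[R]_n, x <> y /\
      forall t : R, 0 <= t -> t <= 1 -> boundary (fball f 1 0) ((1 - t) *: x + t *: y).

Definition Xi {R : realType} {n : nat} (f : 'rV[R]_n -> R) (xi : 'rV[R]_n) : 'rV[R]_n :=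
  (f xi)^-1 *: xi.

(* Main.v *)
Require Import Defs.
From HB Require Import structures.
From mathcomp Require Import all_boot all_order all_algebra.
From mathcomp Require Import all_classical all_reals all_analysis.
From mathcomp Require Import ring lra.
Import Order.TTheory GRing.Theory Num.Theory.
Import numFieldNormedType.Exports.
Local Open Scope classical_set_scope.
Local Open Scope ring_scope.


Lemma nf0 {R : realType} {n : nat} {f : 'rV[R]_n -> R} : is_norm f -> f 0 = 0.
Proof. by case=> _ [_ [h _]]; apply/h. Qed.

Lemma nfZ {R : realType} {n : nat} {f : 'rV[R]_n -> R} : is_norm f ->
  forall (t : R) x, f (t *: x) = `|t| * f x.
Proof.
case=> _ [_ [_ [hN [hZ _]]]] t x.
have [t0|t0] := leP 0 t; first by rewrite hZ // ger0_norm.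
by rewrite -hN -scaleNr hZ ?ltr0_norm // oppr_ge0 ltW.
Qed.

Lemma nftri {R : realType} {n : nat} {f : 'rV[R]_n -> R} : is_norm f ->
  forall x y, f (x + y) <= f x + f y.
Proof.
move=> hf; have f0 := nf0 hf; have fZ := nfZ hf.
case: hf => _ [hp [hz [_ [_ [hc _]]]]] x y.
have [->|xn0] := eqVneq x 0; first by rewrite f0 !add0r.
have [->|yn0] := eqVneq y 0; first by rewrite f0 !addr0.
have a0 : 0 < f x by rewrite lt_def hp andbT; apply/eqP => /hz /eqP; rewrite (negbTE xn0).
have b0 : 0 < f y by rewrite lt_def hp andbT; apply/eqP => /hz /eqP; rewrite (negbTE yn0).
set a := f x in a0 *; set b := f y in b0 *.
have ab0 : 0 < a + b by lra.
have hx : fball f 1 0 (a^-1 *: x) by rewrite /fball /= subr0 fZ ger0_norm ?invr_ge0 ?(ltW a0) // mulVf ?(gt_eqF a0).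
have hy : fball f 1 0 (b^-1 *: y) by rewrite /fball /= subr0 fZ ger0_norm ?invr_ge0 ?(ltW b0) // mulVf ?(gt_eqF b0).
have t0 : 0 <= b / (a + b) by rewrite divr_ge0 // ltW.
have t1 : b / (a + b) <= 1 by rewrite ler_pdivrMr // mul1r; lra.
have := hc _ _ _ hx hy t0 t1.
have -> : (1 - b / (a + b)) *: (a^-1 *: x) + b / (a + b) *: (b^-1 *: y) = (a + b)^-1 *: (x + y).
  apply/rowP => i; rewrite !mxE; field; lra.
rewrite /fball /= subr0 fZ ger0_norm ?invr_ge0 ?(ltW ab0) // => h.
rewrite -[f (x + y)]mul1r -(divff (lt0r_neq0 ab0)) -mulrA.
by have := ler_wpM2l (ltW ab0) h; rewrite mulr1.
Qed.

Lemma nfconv {R : realType} {n : nat} {f : 'rV[R]_n -> R} : is_norm f ->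
  forall (a b : R) x y, 0 <= a -> 0 <= b -> f (a *: x + b *: y) <= a * f x + b * f y.
Proof.
move=> hf a b x y a0 b0; apply: le_trans (nftri hf _ _) _.
by rewrite !(nfZ hf) !ger0_norm.
Qed.

Lemma nfpos {R : realType} {n : nat} {f : 'rV[R]_n -> R} : is_norm f ->
  forall x, x != 0 -> 0 < f x.
Proof.
move=> hf x xn0; case: (hf) => _ [hp [hz _]].
by rewrite lt_def hp andbT; apply/eqP => /hz /eqP; rewrite (negbTE xn0).
Qed.

Lemma nfLB {R : realType} {n : nat} {f : 'rV[R]_n -> R} : is_norm f ->
  exists2 c, 0 < c & forall x, c * `|x| <= f x.
Proof.
move=> hf; have fZ := nfZ hf.
case: (pselect (exists x : 'rV[R]_n, `|x| = 1)) => [[x0 hx0]|nx].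
  pose A := [set x : 'rV[R]_n | `|x| = 1].
  have A0 : A !=set0 by exists x0.
  have cA : compact A.
    apply: bounded_closed_compact.
      rewrite /= /bounded_near; near=> M => x /= ->; near: M.
      by apply: nbhs_pinfty_ge; rewrite num_real.
    apply: (@preimage_closed _ _ (fun x : 'rV[R]_n => `|x|) [set 1]).
      by move=> x _; apply: norm_continuous.
    exact: closed_eq.
  have cf : {within A, continuous f}.
    by apply: continuous_subspaceT; case: hf.
  have [c cA' hc] := EVT_min_rV A0 cA cf.
  have c0 : c != 0.
    by apply/eqP => c0; move: cA'; rewrite inE /A /= c0 normr0 => /eqP; rewrite eq_sym oner_eq0.
  exists (f c); first exact: nfpos.
  move=> x; have [->|xn0] := eqVneq x 0; first by rewrite normr0 mulr0; case: hf => _ [hp _].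
  have nx0 : 0 < `|x| by rewrite normr_gt0.
  have : `|x|^-1 *: x \in A.
    by rewrite inE /A /= normrZ normfV normr_id mulVf ?lt0r_neq0.
  move/hc; rewrite fZ normfV normr_id => h.
  by rewrite mulrC -ler_pdivlMl // mulrC.
exists 1 => // x; rewrite mul1r.
have [->|xn0] := eqVneq x 0; first by rewrite normr0; case: hf => _ [hp _].
exfalso; apply: nx; exists (`|x|^-1 *: x).
by rewrite normrZ normfV normr_id mulVf // normr_eq0.
Unshelve. all: by end_near.
Qed.

Lemma nfbd {R : realType} {n : nat} {f : 'rV[R]_n -> R} : is_norm f ->
  forall x, boundary (fball f 1 0) x <-> f x = 1.
Proof.
move=> hf x; have fZ := nfZ hf; have fc : continuous f by case: hf.
split.
  move=> [cl nint]; apply/eqP; rewrite eq_le; apply/andP; split.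
    rewrite leNgt; apply/negP => h1.
    have hB := @cvgr_gt _ _ _ _ f (f x) (fc x) 1 h1.
    have [y [Ay By]] := cl _ (hB (nbhs_filter x)).
    by move: Ay; rewrite /fball /= subr0 leNgt By.
  rewrite leNgt; apply/negP => h1; apply: nint.
  have hB := @cvgr_lt _ _ _ _ f (f x) (fc x) 1 h1.
  apply: filterS (hB (nbhs_filter x)) => y /= hy.
  by rewrite /fball /= subr0 ltW.
move=> fx1; split.
  by apply: subset_closure; rewrite /fball /= subr0 fx1.
move=> /nbhs_normP [e e0 hA].
have u0 : 0 <= `|x| by [].
pose t := e / (2 * (`|x| + 1)).
have t0 : 0 < t by rewrite /t divr_gt0 // mulr_gt0 //; lra.
have hb : `|x - (1 + t) *: x| < e.
  have -> : x - (1 + t) *: x = - (t *: x) by apply/rowP => i; rewrite !mxE; ring.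
  rewrite normrN normrZ gtr0_norm //.
  rewrite /t mulrAC ltr_pdivrMr; last by lra.
  rewrite ltr_pM2l //; lra.
have := hA ((1 + t) *: x) hb.
rewrite /fball /= subr0 fZ fx1 mulr1 gtr0_norm; last by lra.
lra.
Qed.

Lemma nfS_compact {R : realType} {n : nat} {f : 'rV[R]_n -> R} : is_norm f ->
  compact [set x | f x = 1].
Proof.
move=> hf; have [c c0 hc] := nfLB hf; have fc : continuous f by case: hf.
apply: bounded_closed_compact.
  rewrite /= /bounded_near; near=> M => x /= fx1.
  have : c * `|x| <= 1 by rewrite -fx1.
  rewrite -ler_pdivlMl // mulr1 => h; apply: le_trans h _; near: M.
  by apply: nbhs_pinfty_ge; rewrite num_real.
apply: (@preimage_closed _ _ f [set 1]).
  by move=> y _; apply: fc.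
exact: closed_eq.
Unshelve. all: by end_near.
Qed.

Lemma affc {R : realType} {n : nat} (a : R) :
  continuous (fun z : 'rV[R]_n * 'rV[R]_n => a *: z.2 - z.1).
Proof.
move=> z; apply: cvgB; first apply: cvgZr.
  exact: cvg_snd.
exact: cvg_fst.



Qed.

Lemma Phic {R : realType} {n : nat} {f : 'rV[R]_n -> R} : is_norm f -> forall e : R,
  continuous (fun z : 'rV[R]_n * 'rV[R]_n =>
    Num.max (f ((1 - e) *: z.2 - z.1)) (f (z.2 - z.1)) - f ((1 - e / 2) *: z.2 - z.1)).
Proof.
move=> hf e z; have fc : continuous f by case: hf.
have hc : forall a : R, {for z, continuous (fun z : 'rV[R]_n * 'rV[R]_n => f (a *: z.2 - z.1))}.
  by move=> a; apply: (continuous_comp (affc a z)); apply: fc.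
apply: cvgB; last exact: hc.
have hq : {for z, continuous (fun z : 'rV[R]_n * 'rV[R]_n => f (z.2 - z.1))}.
  apply: (continuous_comp _ (fc _)); apply: cvgB; [exact: cvg_snd | exact: cvg_fst].
exact: (continuous_max (hc _) hq).
Qed.

Lemma Phipos {R : realType} {n : nat} {f : 'rV[R]_n -> R} : is_norm f -> strictly_convex f ->
  forall (e : R) th et, 0 < e -> e <= 1 -> f th = 1 -> f et = 1 ->
  0 < Num.max (f ((1 - e) *: et - th)) (f (et - th)) - f ((1 - e / 2) *: et - th).
Proof.
move=> hf hsc e th et e0 e1 fth fet.
have fZ := nfZ hf; have fcv := nfconv hf; have fp := (hf.2.1).
set p := (1 - e) *: et - th; set q := et - th; set m := (1 - e / 2) *: et - th.
have hm : f m <= 1/2 * f p + 1/2 * f q.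
  have -> : m = 1/2 *: p + 1/2 *: q by apply/rowP => i; rewrite !mxE; field.
  by apply: fcv; lra.
have hpm : f p <= Num.max (f p) (f q) by rewrite le_max lexx.
have hqm : f q <= Num.max (f p) (f q) by rewrite le_max lexx orbT.
rewrite subr_gt0 ltNge; apply/negP => hmax.
have ep : f p = f m by lra.
have eq : f q = f m by lra.
set c := f m in ep eq hm hmax.
have ce : e <= f p + f q.
  have h := nftri hf q (- p).
  have hqp : q + - p = e *: et by apply/rowP => i; rewrite /p /q !mxE; ring.
  rewrite hqp fZ fet mulr1 ger0_norm in h; last lra.
  rewrite (hf.2.2.2.1 p) in h; lra.
have c0 : 0 < c by lra.
apply: hsc; exists (c^-1 *: p), (c^-1 *: q); split.
  move=> hxy; have : c *: (c^-1 *: p) = c *: (c^-1 *: q) by rewrite hxy.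
  rewrite !scalerA mulfV ?lt0r_neq0 // !scale1r /p /q => /rowP hr.
  have : e *: et = 0.
    apply/rowP => i; have := hr i; rewrite !mxE => h; lra.
  by move/(congr1 f); rewrite fZ fet (nf0 hf) mulr1 ger0_norm; lra.
move=> t t0 t1; apply/(nfbd hf).
have fx : f (c^-1 *: p) = 1 by rewrite fZ ger0_norm ?invr_ge0 ?(ltW c0) // ep mulVf ?lt0r_neq0.
have fy : f (c^-1 *: q) = 1 by rewrite fZ ger0_norm ?invr_ge0 ?(ltW c0) // eq mulVf ?lt0r_neq0.
have fmid : f (c^-1 *: m) = 1 by rewrite fZ ger0_norm ?invr_ge0 ?(ltW c0) // mulVf ?lt0r_neq0.
have hz0 := fp ((1 - t) *: (c^-1 *: p) + t *: (c^-1 *: q)).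
have hle : f ((1 - t) *: (c^-1 *: p) + t *: (c^-1 *: q)) <= 1.
  apply: le_trans (fcv _ _ _ _ _ _) _; try lra.
  rewrite fx fy; lra.
apply/eqP; rewrite eq_le hle /=.
have [th2|th2] := leP t (1/2).
  pose l := 1 / (2 * (1 - t)).
  have l0 : 0 < l by rewrite /l divr_gt0 //; lra.
  have l1 : l <= 1 by rewrite /l ler_pdivrMr; lra.
  have hmid : c^-1 *: m = l *: ((1 - t) *: (c^-1 *: p) + t *: (c^-1 *: q)) + (1 - l) *: (c^-1 *: q).
    apply/rowP => i; rewrite /l /m /p /q !mxE; field; rewrite lt0r_neq0 // lt0r_neq0 //; lra.
  have := fcv l (1 - l) ((1 - t) *: (c^-1 *: p) + t *: (c^-1 *: q)) (c^-1 *: q) (ltW l0).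
  rewrite -hmid fmid fy; nra.
pose l := 1 / (2 * t).
have l0 : 0 < l by rewrite /l divr_gt0 //; lra.
have l1 : l <= 1 by rewrite /l ler_pdivrMr; lra.
have hmid : c^-1 *: m = l *: ((1 - t) *: (c^-1 *: p) + t *: (c^-1 *: q)) + (1 - l) *: (c^-1 *: p).
  apply/rowP => i; rewrite /l /m /p /q !mxE; field; rewrite lt0r_neq0 // lt0r_neq0 //; lra.
have := fcv l (1 - l) ((1 - t) *: (c^-1 *: p) + t *: (c^-1 *: q)) (c^-1 *: p) (ltW l0).
rewrite -hmid fmid fx; nra.
Qed.

Theorem lemma2p3 (R : realType) (n : nat) (f : 'rV[R]_n -> R) :
  is_norm f -> strictly_convex f ->
  forall eps : R, 0 < eps ->
  exists delta : R, 0 < delta /\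
    forall theta xi : 'rV[R]_n,
      boundary (fball f 1 0) theta ->
      (fball f 1 0 `\` fball f 1 theta) xi ->
      (boundary (fball f 1 0) `&` (fball f (1 + delta) theta `\` fball f 1 theta)) (Xi f xi) ->
      1 - eps < f xi.
Proof.
move=> hf hsc eps eps0.
have fZ := nfZ hf; have fcv := nfconv hf.
pose e := Num.min eps 1.
have e0 : 0 < e by rewrite /e lt_min eps0 ltr01.
have e1 : e <= 1 by rewrite /e ge_min lexx orbT.
have ee : e <= eps by rewrite /e ge_min lexx.
pose S := [set x : 'rV[R]_n | f x = 1].
case: (pselect (exists x : 'rV[R]_n, f x = 1)) => [[x0 hx0]|nS]; last first.
  exists 1; split => // th xi /(nfbd hf) hth; exfalso; apply: nS; by exists th.
pose Phi := fun z : 'rV[R]_n * 'rV[R]_n =>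
    Num.max (f ((1 - e) *: z.2 - z.1)) (f (z.2 - z.1)) - f ((1 - e / 2) *: z.2 - z.1).
have K0 : (S `*` S) !=set0 by exists (x0, x0).
have cK : compact (S `*` S) by apply: compact_setX; apply: nfS_compact.
have cP : {within S `*` S, continuous Phi} by apply: continuous_subspaceT; apply: Phic.
have [[th0 et0] hK0 hmin] := compact_EVT_min K0 cK cP.
move: hK0; rewrite inE => -[/= hth0 het0].
set mu := Phi (th0, et0).
have mu0 : 0 < mu by apply: Phipos.
exists mu; split => // th xi /(nfbd hf) hth [_ hxi] [/(nfbd hf) hX [hX2 _]].
rewrite /fball /= in hxi hX2.
rewrite ltNge; apply/negP => hs.
have xin0 : xi != 0.
  apply/eqP => x0'; move: hX; rewrite /Xi x0' scaler0 (nf0 hf) => h.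
  by move: (@ltr01 R); rewrite h ltxx.
have s0 : 0 < f xi by apply: nfpos.
have hxe : xi = f xi *: Xi f xi.
  by rewrite /Xi scalerA mulfV ?scale1r // lt0r_neq0.
set s := f xi in s0 hs hX hX2 hxe.
set et := Xi f xi in hX hX2 hxe.
clearbody s et.
have := hmin (th, et); rewrite inE => /(_ (conj hth hX)).
rewrite /= -/mu.
have hq : f (et - th) <= 1 + mu by [].
have hp : f ((1 - e) *: et - th) <= 1 + mu.
  have -> : (1 - e) *: et - th = e *: (- th) + (1 - e) *: (et - th)
    by apply/rowP => i; rewrite !mxE; ring.
  apply: le_trans (fcv _ _ _ _ _ _) _; try lra.
  rewrite (hf.2.2.2.1 th) hth; nra.
have hm : 1 < f ((1 - e / 2) *: et - th).
  set u := 1 - e / 2.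
  have u0 : 0 < u by rewrite /u; lra.
  have hsu : s <= u by rewrite /u; lra.
  have r0 : 0 < s / u by rewrite divr_gt0.
  have r1 : s / u <= 1 by rewrite ler_pdivrMr // mul1r.
  have : (xi - th) = (s / u) *: (u *: et - th) + (1 - s / u) *: (- th).
    rewrite {1}hxe; apply/rowP => i; rewrite !mxE; field; rewrite lt0r_neq0 //.
  move=> hh; rewrite hh in hxi.
  have := fcv (s / u) (1 - s / u) (u *: et - th) (- th) (ltW r0).
  rewrite (hf.2.2.2.1 th) hth mulr1 => /(_ _) h; have := h ltac:(lra). nra.
have hpm : Num.max (f ((1 - e) *: et - th)) (f (et - th)) <= 1 + mu by rewrite ge_max hp hq.
rewrite /Phi /=; lra.
Qed.
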